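(* Let $G$ be a loopy graph with $\mathrm{vm}(G)=k$ which is edge-maximal with respect to this property, i.e. adding to $G$ any edge not already in $G$ (between vertices of $G$, loops included) yields a graph with vertex-maximal matching number different from $k$. Let $\ell=\lambda(G)$ be the number of loops of $G$. Then $G$ contains $LK_\ell$; that is, the loopy vertices of $G$ are pairwise adjacent.
   Context: A loopy graph is a finite graph with no isolated vertices and no multiple edges, possibly with loops. A vertex is loopy if it carries a loop; $\lambda(G)$ is the number of loops (= number of loopy vertices). A matching is a set of pairwise vertex-disjoint edges, loops allowed; $\mathrm{vm}(G)$ is the maximum number of vertices touched by a matching of $G$. $LK_\ell$ denotes the complete graph $K_\ell$ with a loop attached at each vertex. *)

(* Defs.v *)
From mathcomp Require Import all_boot.
Set Implicit Arguments. Unset Strict Implicit. Unset Printing Implicit Defensive.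

(* A loopy graph on a finite vertex type T is given by its edge set
   E : {set {set T}}; an edge is a vertex set of size 2 (ordinary edge)
   or of size 1 (a loop).  Sets make multiple edges impossible. *)
Definition is_edge (T : finType) (e : {set T}) : bool :=
  (#|e| == 1) || (#|e| == 2).

Definition loopy_graph (T : finType) (E : {set {set T}}) : bool :=
  [forall e in E, is_edge e] && (cover E == [set: T]).

Definition is_matching (T : finType) (E M : {set {set T}}) : bool :=
  (M \subset E) && trivIset M.

Definition vm (T : finType) (E : {set {set T}}) : nat :=
  \max_(M in powerset E | trivIset M) #|cover M|.

Definition loopy (T : finType) (E : {set {set T}}) (x : T) : bool :=
  [set x] \in E.

Definition nloops (T : finType) (E : {set {set T}}) : nat :=
  #|[set x | loopy E x]|.

(* Main.v *)
Require Import Defs.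
From mathcomp Require Import all_boot.

Lemma vm_add_pair (T : finType) (E : {set {set T}}) (x y : T) :
  loopy E x -> loopy E y -> x != y -> vm ([set x; y] |: E) <= vm E.
Proof.
move=> lx ly nxy; rewrite /vm; apply/bigmax_leqP => M /andP[].
rewrite powersetE => sME tM.
set e := [set x; y].
have [eM|neM] := boolP (e \in M); last first.
  apply: leq_bigmax_cond; rewrite powersetE tM andbT.
  apply/subsetP => A AM; have := subsetP sME A AM; rewrite in_setU1.
  by case/orP=> // /eqP AE; move: neM; rewrite /e -AE AM.
set M' := [set [set x]; [set y]] :|: (M :\ e).
have dis : forall A, A \in M :\ e -> (x \notin A) && (y \notin A).
  move=> A; rewrite in_setD1 => /andP[Ae AM].
  have D := trivIsetP tM A e AM eM Ae.
  by rewrite (disjointFl D (_ : x \in e)) ?(disjointFl D (_ : y \in e)) // !inE eqxx ?orbT.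
apply: (@leq_trans #|cover M'|); last first.
  apply: leq_bigmax_cond; rewrite powersetE; apply/andP; split.
    apply/subsetP => A; rewrite !inE => /orP[/orP[]/eqP->//|/andP[Ae AM]].
    by have := subsetP sME A AM; rewrite in_setU1 (negbTE Ae).
  apply/trivIsetP => A B; rewrite /M' !in_setU !in_set1.
  have n1 : forall A, A \in M :\ e -> A != [set x].
    move=> C /dis /andP[h _]; apply/eqP => C1; by rewrite C1 set11 in h.
  have n2 : forall A, A \in M :\ e -> A != [set y].
    move=> C /dis /andP[_ h]; apply/eqP => C1; by rewrite C1 set11 in h.
  move=> /orP[/orP[]/eqP->|AM] /orP[/orP[]/eqP->|BM] //; rewrite ?eqxx //.
  - by move=> _; rewrite disjoints1 in_set1.
  - by move=> _; rewrite disjoints1; case/andP: (dis _ BM).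
  - by move=> _; rewrite disjoints1 in_set1 eq_sym.
  - by move=> _; rewrite disjoints1; case/andP: (dis _ BM).
  - by move=> _; rewrite disjoint_sym disjoints1; case/andP: (dis _ AM).
  - by move=> _; rewrite disjoint_sym disjoints1; case/andP: (dis _ AM).
  - move=> AB; move: AM BM; rewrite !in_setD1 => /andP[_ AM] /andP[_ BM].
    exact: (trivIsetP tM).
apply: subset_leq_card; apply/subsetP => z /bigcupP[A AM zA].
have [Ae|Ane] := eqVneq A e.
  move: zA; rewrite Ae in_set2 => /orP[]/eqP->.
    by apply/bigcupP; exists [set x]; rewrite ?set11 // !inE eqxx.
  by apply/bigcupP; exists [set y]; rewrite ?set11 // !inE eqxx ?orbT.
by apply/bigcupP; exists A; rewrite // !inE Ane AM orbT.
Qed.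

Lemma vm_mono (T : finType) (E F : {set {set T}}) : E \subset F -> vm E <= vm F.
Proof.
move=> sEF; rewrite /vm; apply/bigmax_leqP => M /andP[]; rewrite powersetE => sME tM.
by apply: leq_bigmax_cond; rewrite powersetE tM andbT (subset_trans sME).
Qed.

Theorem proposition3p8 (T : finType) (E : {set {set T}}) (k : nat) :
  loopy_graph E ->
  vm E = k ->
  (forall e : {set T}, is_edge e -> e \notin E -> vm (e |: E) <> k) ->
  forall x y : T, loopy E x -> loopy E y -> x != y -> [set x; y] \in E.
Proof.
move=> _ vmk H x y lx ly nxy; apply/negPn/negP => nin.
apply: (H [set x; y]) => //; first by rewrite /is_edge cards2 nxy orbT.
rewrite -vmk; apply/eqP; rewrite eqn_leq vm_add_pair //.
by apply: vm_mono; apply: subsetUr.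
Qed.
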